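(* Let $n\ge 0$ and $i,j\ge -1$ be integers with $i+j=n-1$. Let $p\in\Gamma_n$ with an occurrence $p=bqa$ where $q\in\Gamma_i$. Then: 1. if $i$ is odd, then $a$ is trivial if and only if $\sigma_j(p)\le b$ (i.e. $\sigma_j(p)$, as a suffix of $p$, lies inside $b$); 2. if $i$ is even, then $a$ is a proper prefix of $\mathrm{pre}_p(\sigma_{n-1}(p))$ if and only if $\sigma_j(p)\le b$. Similarly: 1'. if $i$ is odd, then $b$ is trivial if and only if $\pi_j(p)\le a$; 2'. if $i$ is even, then $b$ is a proper suffix of $\mathrm{suf}_p(\pi_{n-1}(p))$ if and only if $\pi_j(p)\le a$.
   Context: Let $\Bbbk$ be a field, $Q=(Q_0,Q_1,s,t)$ a finite quiver, and $A=\Bbbk Q/I$ a finite-dimensional monomial algebra, i.e. $I$ is an ideal generated by paths of length at least $2$. Paths are written from right to left: a path is $p=\alpha_n\cdots\alpha_1$ with arrows $\alpha_i$ and $t(\alpha_i)=s(\alpha_{i+1})$; vertices are the paths of length $0$ (trivial paths, also denoted $1$); $qp$ denotes concatenation when $t(p)=s(q)$. Let $\mathcal B$ be the set of paths not lying in $I$. If $p=bqa$ for paths $a,b,q$, then $q$ is a divisor of $p$; we write $q\le p$ to mean that $q$ is a divisor of $p$ at a fixed position (an occurrence), and then $\mathrm{pre}_p(q):=a$, $\mathrm{suf}_p(q):=b$. If $b$ is trivial, $q$ is a suffix; if $a$ is trivial, $q$ is a prefix; proper means $q\neq p$. Inclusions $\le$ between subpaths of a fixed path refer to their positions in that path. For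 $n\ge -1$, a left $n$-ambiguity is a path $p$ with a decomposition $p=u_{-1}u_0u_1\cdots u_n$ such that $u_{-1}\in Q_0$, $u_0\in Q_1$, $u_i\in\mathcal B$ for all $i$, and for every $0\le i\le n-1$, $u_iu_{i+1}\in I$ while no proper suffix of $u_iu_{i+1}$ lies in $I$ (one writes $p=u_0\cdots u_n$). A right $n$-ambiguity is a path with a decomposition $p=v_n\cdots v_0v_{-1}$ with $v_{-1}\in Q_0$, $v_0\in Q_1$, $v_i\in\mathcal B$, and for $0\le i\le n-1$, $v_{i+1}v_i\in I$ while no proper prefix of $v_{i+1}v_i$ lies in $I$. A path is a left $n$-ambiguity iff it is a right $n$-ambiguity; such paths are called $n$-ambiguities, and $\Gamma_n$ denotes their set. Both decompositions of an $n$-ambiguity are unique. For $p\in\Gamma_n$ with left decomposition $u_0\cdots u_n$ and right decomposition $v_n\cdots v_0$, and $-1\le m\le n$, set $\sigma_m(p):=u_0\cdots u_m$ (a suffix of $p$ which is an $m$-ambiguity) and $\pi_m(p):=v_m\cdots v_0$ (a prefix of $p$ which is an $m$-ambiguity). *)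

(* Defs.v *)
From mathcomp Require Import all_boot all_algebra.
Set Implicit Arguments. Unset Strict Implicit. Unset Printing Implicit Defensive.

(* Conventions.
   - A quiver Q = (V, E, src, tgt) with V, E finite types.
   - A path p = α_n ⋯ α_1 (written right to left, α_1 traversed first) is
     represented by the sequence of its arrows IN WRITTEN ORDER
     [:: α_n; ...; α_1].  Hence the concatenation "q p" (p first, then q)
     is literally  q ++ p.  A trivial path (vertex) is the empty sequence;
     inside a fixed path its vertex is determined by its position.
   - Consecutive arrows: in [:: x; y; ...], y is traversed before x, so
     tgt y = src x.
   - The monomial ideal I is given by a finite list R of generating paths
     (each of length >= 2); a path lies in I iff it has a divisor
     (contiguous subpath) belonging to R. *)

Definition is_path (V : eqType) (E : Type) (src tgt : E -> V) (w : seq E) : bool :=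
  if w is x :: w' then path (fun x y => tgt y == src x) x w' else true.

Definition inI (E : eqType) (R : seq (seq E)) (w : seq E) : bool :=
  has (fun r => infix r w) R.

(* Left n-ambiguity decomposition  p = u_{-1} u_0 u_1 ⋯ u_n,
   us = [:: u_0; ...; u_n]  (u_{-1} is the end vertex of p, implicit). *)
Definition is_left_dec (E : eqType) (R : seq (seq E)) (n : int) (p : seq E)
    (us : seq (seq E)) : Prop :=
  (-1 <= n)%R /\ [/\ size us = `|(n + 1)%R|%N, p = flatten us,
      (0 < size us -> size (nth [::] us 0) = 1)%N,
      (forall k, k < size us -> ~~ inI R (nth [::] us k))%N &
      (forall k, k.+1 < size us ->
         let w := nth [::] us k ++ nth [::] us k.+1 in
         inI R w /\ (* no proper suffix (left part) of u_k u_{k+1} lies in I *)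
         forall m, m < size w -> ~~ inI R (take m w))%N].

(* Right n-ambiguity decomposition  p = v_n ⋯ v_0 v_{-1},
   vs = [:: v_0; ...; v_n]  (v_{-1} is the start vertex of p, implicit). *)
Definition is_right_dec (E : eqType) (R : seq (seq E)) (n : int) (p : seq E)
    (vs : seq (seq E)) : Prop :=
  (-1 <= n)%R /\ [/\ size vs = `|(n + 1)%R|%N, p = flatten (rev vs),
      (0 < size vs -> size (nth [::] vs 0) = 1)%N,
      (forall k, k < size vs -> ~~ inI R (nth [::] vs k))%N &
      (forall k, k.+1 < size vs ->
         let w := nth [::] vs k.+1 ++ nth [::] vs k in
         inI R w /\ (* no proper prefix (right part) of v_{k+1} v_k lies in I *)
         forall m, 0 < m <= size w -> ~~ inI R (drop m w))%N].

Definition Gamma (E : eqType) (R : seq (seq E)) (n : int) (p : seq E) : Prop :=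
  exists us, is_left_dec R n p us.

Definition sigma_amb (E : Type) (us : seq (seq E)) (m : int) : seq E :=
  flatten (take `|(m + 1)%R| us).
Definition pi_amb (E : Type) (vs : seq (seq E)) (m : int) : seq E :=
  flatten (rev (take `|(m + 1)%R| vs)).

(* Occurrences (positions) of subpaths inside a fixed path p:
   (k, l) = the subpath made of the written-order entries k, ..., k+l-1 of p
   (k counted from the left end = the end of the path; l = length). *)
Definition occ := (nat * nat)%type.
Definition occ_le (o1 o2 : occ) : Prop :=
  (o2.1 <= o1.1 /\ o1.1 + o1.2 <= o2.1 + o2.2)%N.
(* o1 is a prefix of o2: contained, sharing the right end (start of path). *)
Definition occ_prefix (o1 o2 : occ) : Prop :=
  occ_le o1 o2 /\ (o1.1 + o1.2 = o2.1 + o2.2)%N.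
(* o1 is a suffix of o2: contained, sharing the left end (end of path). *)
Definition occ_suffix (o1 o2 : occ) : Prop :=
  occ_le o1 o2 /\ o1.1 = o2.1.
Definition occ_proper_prefix (o1 o2 : occ) : Prop := occ_prefix o1 o2 /\ o1 <> o2.
Definition occ_proper_suffix (o1 o2 : occ) : Prop := occ_suffix o1 o2 /\ o1 <> o2.

(* Main.v *)
Require Import Defs.
From mathcomp Require Import all_boot all_algebra.
From mathcomp Require Import zify.
Set Implicit Arguments. Unset Strict Implicit. Unset Printing Implicit Defensive.
Lemma my_evenP K : ~~ odd K -> exists m, K = 2 * m.
Proof. move=> h; exists K./2; rewrite -[K in LHS]odd_double_half (negbTE h) add0n; lia. Qed.
Lemma my_oddP K : odd K -> exists m, K = (2 * m).+1.
Proof. move=> h; exists K./2; rewrite -[K in LHS]odd_double_half h; lia. Qed.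

Section Abs.
Variable Iv : nat -> nat -> Prop.
Hypothesis Ivmono : forall (s s' e' e : nat), s <= s' -> e' <= e -> Iv s' e' -> Iv s e.

Definition lchain (Ef : nat -> nat) (N : nat) :=
 [/\ forall k, k.+2 <= N -> Iv (Ef k) (Ef k.+2),
     forall k x, k.+2 <= N -> Ef k <= x < Ef k.+2 -> ~ Iv (Ef k) x,
     forall k, k < N -> ~ Iv (Ef k) (Ef k.+1) &
     forall k, k < N -> Ef k < Ef k.+1].

Definition rchain (D : nat -> nat) N :=
 [/\ forall k, k.+2 <= N -> Iv (D k.+2) (D k),
     forall k x, k.+2 <= N -> D k.+2 < x <= D k -> ~ Iv x (D k) &
     forall k, k < N -> D k.+1 <= D k].

Variables (E F D : nat -> nat) (N K : nat).
Hypotheses (HE : lchain E N) (HF : lchain F K).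

Lemma FleE t l : F t <= E l -> t.+2 <= K -> l.+2 <= N -> F t.+2 <= E l.+2.
Proof.
case: HE => E1 E2 E3 E4; case: HF => F1 F2 F3 F4 => h ht hl.
rewrite leqNgt; apply/negP => lt.
have a := E1 _ hl. have b := @Ivmono _ _ _ _ h (leqnn _) a.
apply: (F2 t (E l.+2) ht _ b).
have := E4 l (ltnW hl); have := E4 l.+1 hl. lia.
Qed.

Lemma EleF t l : E l <= F t -> t.+2 <= K -> l.+2 <= N -> E l.+2 <= F t.+2.
Proof.
case: HE => E1 E2 E3 E4; case: HF => F1 F2 F3 F4 => h ht hl.
rewrite leqNgt; apply/negP => lt.
have a := F1 _ ht. have b := @Ivmono _ _ _ _ h (leqnn _) a.
apply: (E2 l (F t.+2) hl _ b).
have := F4 t (ltnW ht); have := F4 t.+1 ht. lia.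
Qed.

Lemma FleE_it k t l : F t <= E l -> t + 2 * k <= K -> l + 2 * k <= N ->
  F (t + 2 * k) <= E (l + 2 * k).
Proof.
elim: k => [|k IH] h ht hl; first by rewrite !muln0 !addn0.
have e1 : t + 2 * k.+1 = (t + 2 * k).+2 by lia.
have e2 : l + 2 * k.+1 = (l + 2 * k).+2 by lia.
rewrite e1 e2; apply: FleE; [apply: IH; lia| lia | lia].
Qed.

Lemma EleF_it k t l : E l <= F t -> t + 2 * k <= K -> l + 2 * k <= N ->
  E (l + 2 * k) <= F (t + 2 * k).
Proof.
elim: k => [|k IH] h ht hl; first by rewrite !muln0 !addn0.
have e1 : t + 2 * k.+1 = (t + 2 * k).+2 by lia.
have e2 : l + 2 * k.+1 = (l + 2 * k).+2 by lia.
rewrite e1 e2; apply: EleF; [apply: IH; lia| lia | lia].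
Qed.

Lemma strict_last k l : K = k.+1 -> N = l.+2 -> F k <= E l -> F K = E N -> False.
Proof.
case: HE => E1 E2 E3 E4; case: HF => F1 F2 F3 F4 => hK hN h heq.
have a := E1 l (eq_leq (esym hN)).
rewrite hN hK in heq; have b := @Ivmono _ _ _ _ h (eq_leq (esym heq)) a.
by apply: (F3 k _ b); rewrite hK.
Qed.

Lemma part1 J o P : N = K + J -> E N = P -> F 0 = o -> (0 < K -> F 1 = o.+1) -> F K <= P ->
  (~~ odd K -> (F K = P <-> E J <= o)) /\ (odd K -> (E N.-1 < F K <-> E J <= o)).
Proof.
move=> hN hP h0 h1 hKP; have [E1 E2 E3 E4] := HE; have [F1 F2 F3 F4] := HF.
split=> hodd.
- have [m hm] := my_evenP hodd.
  case: m hm => [|m] hm.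
  + rewrite hm in hN hKP *; rewrite add0n in hN; rewrite -hN hP h0.
    rewrite h0 in hKP; split; first by move->. by move=> ?; apply/eqP; rewrite eqn_leq hKP.
  + split=> H.
    * rewrite leqNgt; apply/negP=> lt.
      have b : F 1 <= E J by rewrite h1 ?hm //.
      have := FleE_it (k:=m) b ltac:(lia) ltac:(lia).
      move=> c; apply: (strict_last (k := 1 + 2 * m) (l := J + 2 * m)) => //; [lia|lia|by rewrite H].
    * have b : E J <= F 0 by rewrite h0.
      have := EleF_it (k:=m.+1) b ltac:(lia) ltac:(lia).
      rewrite add0n -hm addnC -hN hP => c; by apply/eqP; rewrite eqn_leq hKP c.
- have [m hm] := my_oddP hodd.
  split=> H.
  + rewrite leqNgt; apply/negP=> lt.
    have b : F 1 <= E J by rewrite h1 ?hm //.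
    have := FleE_it (k:=m) b ltac:(lia) ltac:(lia).
    have -> : 1 + 2 * m = K by lia. have -> : J + 2 * m = N.-1 by lia. lia.
  + have b : E J <= F 0 by rewrite h0.
    have := EleF_it (k:=m) b ltac:(lia) ltac:(lia).
    have -> : J + 2 * m = N.-1 by lia. rewrite add0n => c.
    apply: leq_ltn_trans c _; rewrite hm; apply: F4; lia.
Qed.

Hypothesis HD : rchain D N.

Lemma down t l : F t <= D l.+2 -> t.+2 <= K -> l.+2 <= N -> F t.+2 <= D l.
Proof.
case: HD => D1 D2 D3; case: HF => F1 F2 F3 F4 => h ht hl.
rewrite leqNgt; apply/negP => lt.
have a := D1 _ hl. have b := @Ivmono _ _ _ _ h (leqnn _) a.
apply: (F2 t (D l) ht _ b).
have := D3 l (ltnW hl); have := D3 l.+1 hl. lia.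
Qed.

Lemma up t l : F t.+2 <= D l -> t.+2 <= K -> l.+2 <= N -> F t <= D l.+2.
Proof.
case: HD => D1 D2 D3; case: HF => F1 F2 F3 F4 => h ht hl.
rewrite leqNgt; apply/negP => lt.
have a := F1 _ ht. have b := @Ivmono _ _ _ _ (leqnn _) h a.
apply: (D2 l (F t) hl _ b).
have := F4 t (ltnW ht); have := F4 t.+1 ht. lia.
Qed.

Lemma updown_it k t l : t + 2 * k <= K -> l + 2 * k <= N ->
  (F t <= D (l + 2 * k) <-> F (t + 2 * k) <= D l).
Proof.
elim: k t => [|k IH] t ht hl; first by rewrite !muln0 !addn0.
have e1 : t + 2 * k.+1 = (t.+2 + 2 * k) by lia.
have e2 : l + 2 * k.+1 = (l + 2 * k).+2 by lia.
rewrite e1 e2 -IH; [|lia|lia]. split=> h.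
- apply: down => //; lia.
- apply: up => //; lia.
Qed.

Lemma part2 J o : N = K + J -> D N = 0 -> F 0 = o -> (0 < K -> F 1 = o.+1) ->
  (~~ odd K -> (o = 0 <-> F K <= D J)) /\ (odd K -> (o.+1 <= D N.-1 <-> F K <= D J)).
Proof.
move=> hN h0D h0 h1.
split=> hodd.
- have [m hm] := my_evenP hodd.
  have := updown_it (k:=m) (t:=0) (l:=J) ltac:(lia) ltac:(lia).
  rewrite add0n -hm addnC -hN h0D h0 => e; rewrite -e leqn0; split; [by move->| by move/eqP].
- have [m hm] := my_oddP hodd.
  have := updown_it (k:=m) (t:=1) (l:=J) ltac:(lia) ltac:(lia).
  have -> : 1 + 2 * m = K by lia. have -> : J + 2 * m = N.-1 by lia.
  by rewrite h1 ?hm.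
Qed.
End Abs.

Definition seg (T : Type) (s : seq T) x y := drop x (take y s).
Definition Ef (T : Type) (ss : seq (seq T)) k := size (flatten (take k ss)).

Section Seg.
Variable T : eqType.
Implicit Types (ss : seq (seq T)).

Lemma take_Ef ss l : take (Ef ss l) (flatten ss) = flatten (take l ss).
Proof. by rewrite /Ef -{2}(cat_take_drop l ss) flatten_cat take_size_cat. Qed.

Lemma drop_Ef ss k : drop (Ef ss k) (flatten ss) = flatten (drop k ss).
Proof. by rewrite /Ef -{2}(cat_take_drop k ss) flatten_cat drop_size_cat. Qed.

Lemma seg_Ef ss k l : k <= l ->
  seg (flatten ss) (Ef ss k) (Ef ss l) = flatten (drop k (take l ss)).
Proof.
move=> kl; rewrite /seg take_Ef.
have -> : Ef ss k = Ef (take l ss) k by rewrite /Ef take_takel.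
by rewrite drop_Ef.
Qed.

Lemma Ef_add ss k l : k <= l ->
  Ef ss l = Ef ss k + size (flatten (drop k (take l ss))).
Proof.
move=> kl; rewrite /Ef -{1}(cat_take_drop k (take l ss)) flatten_cat size_cat.
by rewrite take_takel.
Qed.

Lemma drop_take1 ss k : k < size ss -> drop k (take k.+1 ss) = [:: nth [::] ss k].
Proof.
move=> h; rewrite -add1n -take_drop (drop_nth [::] h) /=.
by rewrite take0.
Qed.

Lemma drop_take2 ss k : k.+1 < size ss ->
  drop k (take k.+2 ss) = [:: nth [::] ss k; nth [::] ss k.+1].
Proof.
move=> h; rewrite -add2n -take_drop (drop_nth [::] (ltnW h)) /=.
by rewrite (drop_nth [::] h) /= take0.
Qed.

Lemma Ef_le ss k : Ef ss k <= size (flatten ss).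
Proof. by rewrite /Ef -{2}(cat_take_drop k ss) flatten_cat size_cat leq_addr. Qed.

Lemma Ef_full ss : Ef ss (size ss) = size (flatten ss).
Proof. by rewrite /Ef take_size. Qed.

Lemma Ef0 ss : Ef ss 0 = 0.
Proof. by rewrite /Ef take0. Qed.

Lemma Ef_mono ss k l : k <= l -> Ef ss k <= Ef ss l.
Proof. by move=> kl; rewrite (Ef_add ss kl) leq_addr. Qed.

Lemma drop_take_gen (t : seq T) a e : drop a (take e t) = take (e - a) (drop a t).
Proof.
case: (leqP a e) => h.
- by rewrite take_drop subnK.
- have -> : e - a = 0 by lia.
  rewrite take0; apply: size0nil; rewrite size_drop size_take_min; lia.
Qed.

Lemma seg_mono (t : seq T) (s s' e' e : nat) : s <= s' -> e' <= e -> infix (seg t s' e') (seg t s e).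
Proof.
move=> h1 h2; rewrite /seg.
have -> : drop s' (take e' t) = drop (s' - s) (drop s (take e' (take e t))).
  by rewrite drop_drop subnK // take_takel.
rewrite [drop s (take e' _)]drop_take_gen.
apply: infix_trans (infix_drop _ _) _.
apply: infix_trans (infix_take _ _) _.
exact: infix_refl.
Qed.

Lemma seg_take (t : seq T) a x e : a <= x <= e -> seg t a x = take (x - a) (seg t a e).
Proof.
move=> /andP[h1 h2]; rewrite /seg take_drop subnK // take_takel //.
Qed.

Lemma seg_drop (t : seq T) a x e : a <= x -> seg t x e = drop (x - a) (seg t a e).
Proof. by move=> h; rewrite /seg drop_drop subnK. Qed.

Lemma seg_shift (b s : seq T) x y : seg (b ++ s) (size b + x) (size b + y) = seg s x y.
Proof.
rewrite /seg takeD take_size_cat // (@drop_size_cat _ (size b) b s) //.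
by rewrite addnC -drop_drop drop_size_cat.
Qed.
Lemma seg_pair ss k : k.+1 < size ss -> seg (flatten ss) (Ef ss k) (Ef ss k.+2) =
   nth [::] ss k ++ nth [::] ss k.+1.
Proof. by move=> h; rewrite seg_Ef ?(leqW (leqnSn k)) // drop_take2 //= cats0. Qed.

Lemma Ef_pair ss k : k.+1 < size ss -> Ef ss k.+2 = Ef ss k + size (nth [::] ss k ++ nth [::] ss k.+1).
Proof. by move=> h; rewrite (@Ef_add ss k k.+2) ?(leqW (leqnSn k)) // drop_take2 //= cats0. Qed.
End Seg.

Section Chains.
Variables (E : eqType) (R : seq (seq E)).

Definition Ivs (s : seq E) x y : Prop := inI R (seg s x y).

Lemma inI_infix x y : infix x y -> inI R x -> inI R y.
Proof. by move=> h /hasP[r rR hr]; apply/hasP; exists r => //; apply: infix_trans h. Qed.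

Lemma Ivs_mono s : forall (a a' e' e : nat), a <= a' -> e' <= e -> Ivs s a' e' -> Ivs s a e.
Proof. by move=> a a' e' e h1 h2; apply: inI_infix; apply: seg_mono. Qed.

Lemma lchain_of_dec n s us : is_left_dec R n s us ->
  lchain (Ivs s) (Ef us) (size us).
Proof.
move=> [_ [hsz hs h0 hB hrel]]; subst s.
have piece k : k < size us -> seg (flatten us) (Ef us k) (Ef us k.+1) = nth [::] us k.
  by move=> h; rewrite seg_Ef // drop_take1 //= cats0.
have pair k : k.+1 < size us -> seg (flatten us) (Ef us k) (Ef us k.+2) =
   nth [::] us k ++ nth [::] us k.+1.
  by move=> h; rewrite seg_Ef ?(leqW (leqnSn k)) // drop_take2 //= cats0.
have szpair k : k.+1 < size us -> Ef us k.+2 = Ef us k + size (nth [::] us k ++ nth [::] us k.+1).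
  by move=> h; rewrite (@Ef_add _ us k k.+2) ?(leqW (leqnSn k)) // drop_take2 //= cats0.
have szpiece k : k < size us -> Ef us k.+1 = Ef us k + size (nth [::] us k).
  by move=> h; rewrite (@Ef_add _ us k k.+1) // drop_take1 //= cats0.
split.
- move=> k h; rewrite /Ivs pair //; exact: (hrel k h).1.
- move=> k x h /andP[h1 h2]; rewrite /Ivs (@seg_take _ _ _ _ (Ef us k.+2)); last first.
    by rewrite h1 ltnW.
  rewrite pair //; apply/negP; apply: (hrel k h).2.
  move: h2; rewrite szpair //; lia.
- by move=> k h; rewrite /Ivs piece //; apply/negP; apply: hB.
- move=> k h; rewrite szpiece // -[X in X < _]addn0 ltn_add2l.
  case: k h => [|k] h; first by rewrite h0.
  rewrite lt0n size_eq0; apply/eqP=> e; have := (hrel k h).1; rewrite e cats0 => hI.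
  by move: (hB k (ltnW h)); rewrite hI.
Qed.

Lemma rchain_of_dec n s vs : is_right_dec R n s vs ->
  rchain (Ivs s) (fun k => Ef (rev vs) (size vs - k)) (size vs).
Proof.
move=> [_ [hsz hs h0 hB hrel]]; subst s.
have W k : k.+1 < size vs ->
  seg (flatten (rev vs)) (Ef (rev vs) (size vs - k.+2)) (Ef (rev vs) (size vs - k)) =
  nth [::] vs k.+1 ++ nth [::] vs k.
  move=> h; have -> : size vs - k = (size vs - k.+2).+2 by lia.
  rewrite seg_pair ?size_rev; last by lia.
  rewrite !nth_rev; [|lia|lia].
  have -> : size vs - (size vs - k.+2).+1 = k.+1 by lia.
  by have -> : size vs - (size vs - k.+2).+2 = k by lia.
have S k : k.+1 < size vs ->
  Ef (rev vs) (size vs - k) = Ef (rev vs) (size vs - k.+2) + size (nth [::] vs k.+1 ++ nth [::] vs k).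
  move=> h; have -> : size vs - k = (size vs - k.+2).+2 by lia.
  rewrite Ef_pair ?size_rev; last by lia.
  rewrite !nth_rev; [|lia|lia].
  have -> : size vs - (size vs - k.+2).+1 = k.+1 by lia.
  by have -> : size vs - (size vs - k.+2).+2 = k by lia.
split.
- move=> k h; rewrite /Ivs W //; exact: (hrel k h).1.
- move=> k x h /andP[h1 h2]; rewrite /Ivs (seg_drop _ _ (ltnW h1)) W //.
  apply/negP; apply: (hrel k h).2.
  have := S k h; move: h1 h2; lia.
- move=> k h; apply: Ef_mono; lia.
Qed.

Lemma Ivs_shift (b q a : seq E) x y : y <= size q ->
  Ivs (b ++ q ++ a) (size b + x) (size b + y) <-> Ivs q x y.
Proof. by move=> h; rewrite /Ivs seg_shift /seg takel_cat. Qed.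

Lemma lchain_shift (b q a : seq E) F K : lchain (Ivs q) F K ->
  (forall k, F k <= size q) -> lchain (Ivs (b ++ q ++ a)) (fun k => size b + F k) K.
Proof.
move=> [F1 F2 F3 F4] hF; split.
- by move=> k h; apply/(@Ivs_shift b q a _ _ (hF k.+2)); apply: F1.
- move=> k x h /andP[h1 h2].
  have ex : x = size b + (x - size b) by lia.
  have hle : x - size b <= size q by have := hF k.+2; lia.
  rewrite ex => /(@Ivs_shift b q a _ _ hle); apply: F2 h _; apply/andP; split; lia.
- by move=> k h /(@Ivs_shift b q a _ _ (hF k.+1)); apply: F3.
- by move=> k h; rewrite ltn_add2l; apply: F4.
Qed.
End Chains.

Lemma odd_abs (i : int) : (-1 <= i)%R -> odd `|i| = ~~ odd `|(i+1)%R|.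
Proof.
move=> h.
have [[e1 e2]|e] : (`|i| = 1 /\ `|(i+1)%R| = 0)%N \/ (`|(i+1)%R| = `|i| + 1)%N by lia.
- by rewrite e1 e2.
- by rewrite e addn1 /= negbK.
Qed.

Lemma ole0 x y : occ_le (0, x) (0, y) <-> (x <= y)%N.
Proof. by rewrite /occ_le /= !add0n; split=> [[]|] //. Qed.

Lemma pp_iff sb sq sa P e : P = (sb + sq + sa)%N -> (e <= P)%N ->
  (occ_proper_prefix (sb + sq, sa)%N (e, P - e)%N <-> (e < sb + sq)%N).
Proof.
move=> hP he; rewrite /occ_proper_prefix /occ_prefix /occ_le /=; split.
- move=> [[[h1 h2] h3] hne]; rewrite ltn_neqAle h1 andbT; apply/eqP=> ee.
  by apply: hne; congr pair; lia.
- move=> h; split; first by split; [split|]; lia.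
  by case=> ee; lia.
Qed.

Lemma ps_iff sb d : occ_proper_suffix (0, sb)%N (0, d)%N <-> (sb < d)%N.
Proof.
rewrite /occ_proper_suffix /occ_suffix /occ_le /= !add0n; split.
- move=> [[[_ h] _] hne]; rewrite ltn_neqAle h andbT; apply/eqP=> ee.
  by apply: hne; rewrite ee.
- by move=> h; split; [split; [split|]|case=> ee]; lia.
Qed.

Lemma ole2 sb sq sa P d : P = (sb + sq + sa)%N -> (d <= P)%N ->
  (occ_le (P - d, d)%N (sb + sq, sa)%N <-> (sb + sq <= P - d)%N).
Proof. move=> hP hd; rewrite /occ_le /=; split; [case|split]; lia. Qed.

Lemma D_split (E : Type) (vs : seq (seq E)) k : (k <= size vs)%N ->
  size (flatten (rev vs)) = (Ef (rev vs) (size vs - k) + size (flatten (rev (take k vs))))%N.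
Proof.
move=> hk; rewrite /Ef take_rev subKn // -{1}(cat_take_drop k vs) rev_cat flatten_cat size_cat.
done.
Qed.

Theorem mainTheorem7 (V E : finType) (src tgt : E -> V) (R : seq (seq E))
  (HR : forall r, r \in R -> (2 <= size r)%N /\ is_path src tgt r)
  (Hfd : exists N, forall w, is_path src tgt w -> (N <= size w)%N -> inI R w)
  (n i j : int) (Hn : (0 <= n)%R) (Hi : (-1 <= i)%R) (Hj : (-1 <= j)%R)
  (Hij : (i + j = n - 1)%R)
  (p b q a : seq E) (Hp : is_path src tgt p) (HpG : Gamma R n p)
  (Hocc : p = b ++ q ++ a) (HqG : Gamma R i q) :
  (forall us, is_left_dec R n p us ->
     let a_occ : occ := (size b + size q, size a)%N in
     let b_occ : occ := (0, size b)%N in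
     let sj_occ : occ := (0, size (sigma_amb us j))%N in
     let pre_occ : occ :=
       (size (sigma_amb us (n - 1)%R), size p - size (sigma_amb us (n - 1)%R))%N in
     (odd `|i| -> (a = [::] <-> occ_le sj_occ b_occ)) /\
     (~~ odd `|i| -> (occ_proper_prefix a_occ pre_occ <-> occ_le sj_occ b_occ))) /\
  (forall vs, is_right_dec R n p vs ->
     let a_occ : occ := (size b + size q, size a)%N in
     let b_occ : occ := (0, size b)%N in
     let pj_occ : occ := (size p - size (pi_amb vs j), size (pi_amb vs j))%N in
     let suf_occ : occ := (0, size p - size (pi_amb vs (n - 1)%R))%N in
     (odd `|i| -> (b = [::] <-> occ_le pj_occ a_occ)) /\
     (~~ odd `|i| -> (occ_proper_suffix b_occ suf_occ <-> occ_le pj_occ a_occ))).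
Proof.
have [N1 [N2 N3]] : `|(n+1)%R|%N = (`|(i+1)%R| + `|(j+1)%R|)%N /\ (1 <= `|(n+1)%R|)%N
   /\ `|(n - 1 + 1)%R|%N = (`|(n+1)%R|).-1 by lia.
have hodd := odd_abs Hi.
case: HqG => us' Hus'.
have [hK hq h0'] : [/\ size us' = `|(i+1)%R|, q = flatten us' &
    (0 < size us' -> size (nth [::] us' 0) = 1)%N] by case: Hus' => _ [].
have HF0 := lchain_of_dec Hus'.
have HF := lchain_shift b a HF0 (fun k => eq_ind_r (fun x => (Ef us' k <= size x)%N) (Ef_le us' k) hq).
rewrite -Hocc in HF.
set F := fun k => (size b + Ef us' k)%N.
have F0 : F 0 = size b by rewrite /F Ef0 addn0.
have F1 : (0 < size us')%N -> F 1 = (size b).+1.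
  move=> h; rewrite /F (@Ef_add _ us' 0 1) // drop_take1 //= cats0 h0' //.
  by rewrite Ef0 add0n addn1.
have FK : F (size us') = (size b + size q)%N by rewrite /F Ef_full hq.
have hP : size p = (size b + size q + size a)%N by rewrite Hocc !size_cat addnA.
have Imono := (fun s s' e' e => @Ivs_mono _ R p s s' e' e).
split.
- move=> us Hus; cbv zeta.
  have [hN hp] : size us = `|(n+1)%R| /\ p = flatten us by case: Hus => _ [].
  have HE := lchain_of_dec Hus.
  have [P1 P2] := part1 Imono (F := F) HE HF (J := `|(j+1)%R|) (o := size b) (P := size p)
     ltac:(lia) ltac:(by rewrite Ef_full -hp) F0 F1 ltac:(by rewrite FK hP leq_addr).
  rewrite FK hK in P1 P2.
  split.
  + rewrite hodd => /P1 e; rewrite ole0 -e; change (size (sigma_amb us j)) with (Ef us `|(j+1)%R|).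
    rewrite hP; split=> [->|h]; first by rewrite addn0.
    by apply/nilP; rewrite /nilp; apply/eqP; lia.
  + rewrite hodd negbK => /P2 e; rewrite ole0 -e.
    change (size (sigma_amb us (n-1)%R)) with (Ef us `|(n-1+1)%R|); rewrite N3 -hN.
    apply: pp_iff => //; rewrite hp; exact: Ef_le.
- move=> vs Hvs; cbv zeta.
  have [hN hp] : size vs = `|(n+1)%R| /\ p = flatten (rev vs) by case: Hvs => _ [].
  have HD := rchain_of_dec Hvs.
  have [P1 P2] := part2 Imono (F := F) HF HD (J := `|(j+1)%R|) (o := size b)
     ltac:(lia) ltac:(by rewrite /= subnn Ef0) F0 F1.
  rewrite FK hK in P1 P2.
  have piJ : (size p - size (pi_amb vs j))%N = Ef (rev vs) (size vs - `|(j+1)%R|).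
    rewrite /pi_amb hp (@D_split _ vs `|(j+1)%R|); last by lia.
    by rewrite addnK.
  have hpi : (size (pi_amb vs j) <= size p)%N.
    rewrite /pi_amb hp (@D_split _ vs `|(j+1)%R|); last by lia.
    by rewrite leq_addl.
  split.
  + rewrite hodd => /P1 e; rewrite ole2 // piJ -e; split; first by move->.
    by move=> h; apply/nilP; rewrite /nilp; apply/eqP; lia.
  + rewrite hodd negbK => /P2 e.
    have -> : (size p - size (pi_amb vs (n - 1)%R))%N = Ef (rev vs) (size vs - (size vs).-1).
      rewrite /pi_amb N3 -hN hp (@D_split _ vs (size vs).-1); last by lia.
      by rewrite addnK.
    by rewrite ps_iff ole2 // piJ -e.
Qed.
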